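(* Let $S$ be a quasi-adequate semigroup with an admissible adequate transversal $S^0$. Then for all $x,y\in S$, $e_{xy}=e_x\,e_{\overline{x}f_xe_y\overline{y}}$ and $f_{xy}=f_{\overline{x}f_xe_y\overline{y}}\,f_y$.
   Context: For a semigroup $S$, $S^1$ is $S$ with an identity adjoined, $\mathcal{L},\mathcal{R}$ Green's relations. $\mathcal{R}^\ast=\{(a,b):\forall x,y\in S^1,\ xa=ya\iff xb=yb\}$, $\mathcal{L}^\ast=\{(a,b):\forall x,y\in S^1,\ ax=ay\iff bx=by\}$. $S$ is abundant if each $\mathcal{R}^\ast$- and $\mathcal{L}^\ast$-class contains an idempotent; adequate if also idempotents commute (then $a^+$, $a^\ast$ are the unique idempotents $\mathcal{R}^\ast$-, resp. $\mathcal{L}^\ast$-related to $a$). Quasi-adequate: abundant with the idempotents forming a subsemigroup. An abundant subsemigroup $U$ of abundant $S$ is a $\ast$-subsemigroup if $\mathcal{L}^\ast(U)=\mathcal{L}^\ast(S)\cap(U\times U)$, $\mathcal{R}^\ast(U)=\mathcal{R}^\ast(S)\cap(U\times U)$. An adequate $\ast$-subsemigroup $S^0$ of abundant $S$ is an adequate transversal if each $x\in S$ has a unique $\overline{x}\in S^0$ and idempotents $e,f$ of $S$ with $x=e\overline{x}f$, $e\,\mathcal{L}\,\overline{x}^+$, $f\,\mathcal{R}\,\overline{x}^\ast$; these are unique and written $e_x:=e$, $f_x:=f$. It is admissible if $\overline{xy}=\overline{x}\,\overline{y}$ for all $x,y\in S$. *)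

(* Defs.v *)
Set Implicit Arguments.

Section Semigroups.
Variable S : Type.
Variable mul : S -> S -> S.

(* S^1 is modelled as option S, None being the adjoined identity. *)
Definition lmul (o : option S) (a : S) : S :=
  match o with None => a | Some x => mul x a end.
Definition rmul (a : S) (o : option S) : S :=
  match o with None => a | Some x => mul a x end.

Definition in1 (U : S -> Prop) (o : option S) : Prop :=
  match o with None => True | Some u => U u end.

Definition idempotent (e : S) : Prop := mul e e = e.

Definition Lrel (a b : S) : Prop :=
  exists u v : option S, a = lmul u b /\ b = lmul v a.
Definition Rrel (a b : S) : Prop :=
  exists u v : option S, a = rmul b u /\ b = rmul a v.

Definition RstarIn (U : S -> Prop) (a b : S) : Prop :=
  forall x y : option S, in1 U x -> in1 U y ->
    (lmul x a = lmul y a <-> lmul x b = lmul y b).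
Definition LstarIn (U : S -> Prop) (a b : S) : Prop :=
  forall x y : option S, in1 U x -> in1 U y ->
    (rmul a x = rmul a y <-> rmul b x = rmul b y).

Definition full : S -> Prop := fun _ => True.
Definition Rstar := RstarIn full.
Definition Lstar := LstarIn full.

Definition subsemigroup (U : S -> Prop) : Prop :=
  forall a b, U a -> U b -> U (mul a b).

Definition abundantIn (U : S -> Prop) : Prop :=
  forall a, U a ->
    (exists e, U e /\ idempotent e /\ RstarIn U a e) /\
    (exists f, U f /\ idempotent f /\ LstarIn U a f).

Definition abundant : Prop := abundantIn full.

Definition quasi_adequate : Prop :=
  abundant /\ (forall e f, idempotent e -> idempotent f -> idempotent (mul e f)).

Definition adequateIn (U : S -> Prop) : Prop :=
  abundantIn U /\
  (forall e f, U e -> U f -> idempotent e -> idempotent f -> mul e f = mul f e).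

Definition star_subsemigroup (U : S -> Prop) : Prop :=
  subsemigroup U /\ abundantIn U /\
  (forall a b, U a -> U b ->
     (LstarIn U a b <-> Lstar a b) /\ (RstarIn U a b <-> Rstar a b)).

Definition is_plus (S0 : S -> Prop) (a p : S) : Prop :=
  S0 p /\ idempotent p /\ RstarIn S0 a p.
Definition is_star (S0 : S -> Prop) (a q : S) : Prop :=
  S0 q /\ idempotent q /\ LstarIn S0 a q.

(* xb = x-bar, e = e_x, f = f_x *)
Definition transversal_triple (S0 : S -> Prop) (x xb e f : S) : Prop :=
  S0 xb /\ idempotent e /\ idempotent f /\ x = mul (mul e xb) f /\
  (exists p, is_plus S0 xb p /\ Lrel e p) /\
  (exists q, is_star S0 xb q /\ Rrel f q).

Definition adequate_transversal (S0 : S -> Prop) : Prop :=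
  adequateIn S0 /\ star_subsemigroup S0 /\
  forall x, exists xb e f, transversal_triple S0 x xb e f /\
    (forall xb' e' f', transversal_triple S0 x xb' e' f' ->
        xb' = xb /\ e' = e /\ f' = f).

End Semigroups.

Arguments full {S} _.

(* Main.v *)
Require Import Defs.
Set Implicit Arguments.
Unset Strict Implicit.

Section H.
Variable S : Type.
Variable mul : S -> S -> S.
Hypothesis Hassoc : forall a b c, mul a (mul b c) = mul (mul a b) c.

Lemma L_right a b : Lrel mul a b -> idempotent mul b -> mul a b = a.
Proof. intros [u [v [Ha Hb]]] Hi; unfold idempotent in Hi.
destruct u as [u|]; simpl in Ha; subst a; [rewrite <- Hassoc, Hi|]; auto. Qed.
Lemma L_left a b : Lrel mul a b -> idempotent mul a -> mul b a = b.
Proof. intros [u [v [Ha Hb]]] Hi; unfold idempotent in Hi.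
destruct v as [v|]; simpl in Hb; subst b; [rewrite <- Hassoc, Hi|]; auto. Qed.
Lemma R_left a b : Rrel mul a b -> idempotent mul b -> mul b a = a.
Proof. intros [u [v [Ha Hb]]] Hi; unfold idempotent in Hi.
destruct u as [u|]; simpl in Ha; subst a; [rewrite Hassoc, Hi|]; auto. Qed.
Lemma R_right a b : Rrel mul a b -> idempotent mul a -> mul a b = b.
Proof. intros [u [v [Ha Hb]]] Hi; unfold idempotent in Hi.
destruct v as [v|]; simpl in Hb; subst b; [rewrite Hassoc, Hi|]; auto. Qed.

Lemma plus_id (S0 : S -> Prop) a p : RstarIn mul S0 a p -> S0 p -> idempotent mul p -> mul p a = a.
Proof. intros H Sp Ip. specialize (H (Some p) None Sp I). simpl in H. apply (proj2 H). exact Ip. Qed.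
Lemma star_id (S0 : S -> Prop) a q : LstarIn mul S0 a q -> S0 q -> idempotent mul q -> mul a q = a.
Proof. intros H Sq Iq. specialize (H (Some q) None Sq I). simpl in H. apply (proj2 H). exact Iq. Qed.
Lemma plus_mono (S0 : S -> Prop) a p r : RstarIn mul S0 a p -> S0 r -> mul r a = a -> mul r p = p.
Proof. intros H Sr E. specialize (H (Some r) None Sr I). simpl in H. apply (proj1 H). exact E. Qed.
Lemma star_mono (S0 : S -> Prop) a q s : LstarIn mul S0 a q -> S0 s -> mul a s = a -> mul q s = q.
Proof. intros H Ss E. specialize (H (Some s) None Ss I). simpl in H. apply (proj1 H). exact E. Qed.
End H.

Theorem theorem2p13 (S : Type) (mul : S -> S -> S)
  (Hassoc : forall a b c, mul a (mul b c) = mul (mul a b) c)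
  (HQA : quasi_adequate mul)
  (S0 : S -> Prop) (HS0 : adequate_transversal mul S0)
  (bar ex fx : S -> S)
  (Hbar : forall x, transversal_triple mul S0 x (bar x) (ex x) (fx x))
  (Hadm : forall x y, bar (mul x y) = mul (bar x) (bar y)) :
  forall x y : S,
    ex (mul x y) = mul (ex x) (ex (mul (mul (mul (bar x) (fx x)) (ex y)) (bar y))) /\
    fx (mul x y) = mul (fx (mul (mul (mul (bar x) (fx x)) (ex y)) (bar y))) (fx y).
Proof.
intros x y.
destruct HQA as [_ Hidm].
destruct HS0 as [[Hab0 Hcomm] [_ Huniq]].
assert (Hdet : forall z xb e f, transversal_triple mul S0 z xb e f -> xb = bar z /\ e = ex z /\ f = fx z).
{ intros z xb e f T. destruct (Huniq z) as [xb0 [e0 [f0 [T0 U]]]].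
  destruct (U _ _ _ T) as [A [B C]]. destruct (U _ _ _ (Hbar z)) as [A' [B' C']].
  repeat split; congruence. }
assert (Hfix : forall s, S0 s -> bar s = s).
{ intros s Ss. destruct (Hab0 s Ss) as [[e [Se [Ie Re]]] [f [Sf [If Lf]]]].
  assert (E1 : mul e s = s) by exact (plus_id Re Se Ie).
  assert (E2 : mul s f = s) by exact (star_id Lf Sf If).
  assert (T : transversal_triple mul S0 s s e f).
  { refine (conj Ss (conj Ie (conj If (conj _ (conj _ _))))).
    - rewrite E1, E2; reflexivity.
    - exists e; split; [exact (conj Se (conj Ie Re))|]. exists None, None; simpl; split; reflexivity.
    - exists f; split; [exact (conj Sf (conj If Lf))|]. exists None, None; simpl; split; reflexivity. }
  destruct (Hdet _ _ _ _ T) as [A _]. symmetry; exact A. }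
assert (Hbarf : forall z q, is_star mul S0 (bar z) q -> Rrel mul (fx z) q -> bar (fx z) = q).
{ intros z q [Sq [Iq Lq]] HR.
  destruct (Hbar z) as [_ [_ [If _]]].
  assert (A1 : mul q (fx z) = fx z) by (apply R_left; assumption).
  assert (A2 : mul (fx z) q = q) by (apply R_right; assumption).
  destruct (Hbar (fx z)) as [Sb _].
  assert (Ib : idempotent mul (bar (fx z))) by (unfold idempotent; rewrite <- Hadm, If; reflexivity).
  assert (B1 : mul (bar (fx z)) q = q).
  { pose proof (Hadm (fx z) q) as H. rewrite A2, (Hfix q Sq) in H. symmetry; exact H. }
  assert (B2 : mul q (bar (fx z)) = bar (fx z)).
  { pose proof (Hadm q (fx z)) as H. rewrite A1, (Hfix q Sq) in H. symmetry; exact H. }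
  transitivity (mul q (bar (fx z))); [symmetry; exact B2|].
  rewrite (Hcomm _ _ Sq Sb Iq Ib). exact B1. }
assert (Hbare : forall z p, is_plus mul S0 (bar z) p -> Lrel mul (ex z) p -> bar (ex z) = p).
{ intros z p [Sp [Ip Rp]] HL.
  destruct (Hbar z) as [_ [Ie _]].
  assert (A1 : mul (ex z) p = ex z) by (apply L_right; assumption).
  assert (A2 : mul p (ex z) = p) by (apply L_left; assumption).
  destruct (Hbar (ex z)) as [Sb _].
  assert (Ib : idempotent mul (bar (ex z))) by (unfold idempotent; rewrite <- Hadm, Ie; reflexivity).
  assert (B1 : mul p (bar (ex z)) = p).
  { pose proof (Hadm p (ex z)) as H. rewrite A2, (Hfix p Sp) in H. symmetry; exact H. }
  assert (B2 : mul (bar (ex z)) p = bar (ex z)).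
  { pose proof (Hadm (ex z) p) as H. rewrite A1, (Hfix p Sp) in H. symmetry; exact H. }
  transitivity (mul (bar (ex z)) p); [symmetry; exact B2|].
  rewrite (Hcomm _ _ Sb Sp Ib Ip). exact B1. }
destruct (Hbar x) as [Sx [Iex [Ifx [Ex [[r [Pr Lr]] [q [Qq Rq]]]]]]].
destruct (Hbar y) as [Sy [Iey [Ify [Ey [[r' [Pr' Lr']] [s [Qs Rs]]]]]]].
pose proof (Hbarf x q Qq Rq) as Bf. pose proof (Hbare y r' Pr' Lr') as Be.
remember (mul (mul (mul (bar x) (fx x)) (ex y)) (bar y)) as w eqn:Hw.
assert (Bw : bar w = mul (bar x) (bar y)).
{ rewrite Hw, !Hadm, Bf, Be, (Hfix _ Sx), (Hfix _ Sy).
  destruct Qq as [Sq [Iq Lq]]. rewrite (star_id Lq Sq Iq).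
  destruct Pr' as [Sr' [Ir' Rr']]. rewrite <- Hassoc, (plus_id Rr' Sr' Ir'). reflexivity. }
destruct (Hbar w) as [Sw [Iew [Ifw [Ew [[p [Pp Lp]] [q' [Qq' Rq']]]]]]].
rewrite Bw in Sw, Ew, Pp, Qq'.
destruct Pr as [Sr [Ir Rr]]. destruct Pp as [Sp [Ip Rp]].
destruct Qs as [Ss [Is Ls]]. destruct Qq' as [Sq' [Iq' Lq']].
assert (rx : mul r (bar x) = bar x) by exact (plus_id Rr Sr Ir).
assert (rp : mul r p = p).
{ apply (plus_mono Rp Sr). rewrite Hassoc, rx; reflexivity. }
assert (pr : mul p r = p) by (rewrite (Hcomm p r Sp Sr Ip Ir); exact rp).
assert (ewp : mul (ex w) p = ex w) by (apply L_right; auto).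
assert (pew : mul p (ex w) = p) by (apply L_left; auto).
assert (exr : mul r (ex x) = r) by (apply L_left; auto).
assert (pex : mul p (ex x) = p) by (rewrite <- pr, <- Hassoc, exr; reflexivity).
assert (ys : mul (bar y) s = bar y) by exact (star_id Ls Ss Is).
assert (qs : mul q' s = q').
{ apply (star_mono Lq' Ss). rewrite <- Hassoc, ys; reflexivity. }
assert (sq : mul s q' = q') by (rewrite <- (Hcomm q' s Sq' Ss Iq' Is); exact qs).
assert (qfw : mul q' (fx w) = fx w) by (apply R_left; auto).
assert (fwq : mul (fx w) q' = q') by (apply R_right; auto).
assert (fys : mul (fx y) s = s) by (apply R_right; auto).
assert (fyq : mul (fx y) q' = q') by (rewrite <- sq, Hassoc, fys; reflexivity).
assert (T : transversal_triple mul S0 (mul x y) (mul (bar x) (bar y))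
              (mul (ex x) (ex w)) (mul (fx w) (fx y))).
{ refine (conj Sw (conj (Hidm _ _ Iex Iew) (conj (Hidm _ _ Ifw Ify) (conj _ (conj _ _))))).
  - transitivity (mul (mul (mul (ex x) (bar x)) (fx x)) (mul (mul (ex y) (bar y)) (fx y))).
    { rewrite <- Ex, <- Ey; reflexivity. }
    transitivity (mul (mul (ex x) (mul (mul (ex w) (mul (bar x) (bar y))) (fx w))) (fx y)).
    { rewrite <- Ew, Hw. rewrite <- !Hassoc. reflexivity. }
    rewrite <- !Hassoc. reflexivity.
  - exists p; split; [exact (conj Sp (conj Ip Rp))|].
    exists (Some (mul (ex x) (ex w))), (Some p); simpl; split.
    + rewrite <- Hassoc, ewp; reflexivity.
    + rewrite Hassoc, pex, pew; reflexivity.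
  - exists q'; split; [exact (conj Sq' (conj Iq' Lq'))|].
    exists (Some (mul (fx w) (fx y))), (Some q'); simpl; split.
    + rewrite Hassoc, qfw; reflexivity.
    + rewrite <- Hassoc, fyq, fwq; reflexivity. }
destruct (Hdet _ _ _ _ T) as [_ [A B]].
split; symmetry; assumption.
Qed.
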